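(* Let $G=\langle a,b,c\mid a^2=b^2=c^2=(ab)^3=(bc)^3=(ca)^3=1\rangle$ act on the Euclidean plane $\mathbf E^2$ as the reflection group of the tiling by equilateral triangles, and give $\mathbf E^2$ the structure of a space with walls whose walls are the lines of this tiling (each line determining the two open-or-closed half-planes it bounds, chosen as a complementary pair). Then the associated CAT(0) cube complex $X$ is isomorphic to $\mathbf R^3$ with its standard cubulation (vertex set $\mathbf Z^3$); the induced action of $G$ on $X$ is proper, preserves a plane perpendicular to $(1,1,1)$ on which it acts cocompactly, but is not cocompact on $X$.
   Context: A space with walls is a set $Y$ with a non-empty collection $\mathcal H\subset\mathcal P(Y)$ of non-empty subsets closed under complement, such that for any $p,q\in Y$ only finitely many $h\in\mathcal H$ contain $p$ but not $q$. Walls: $\{h,h^c\}$; $W$ the set of walls; walls cross if all four intersections of their half-spaces are non-empty. The associated cube complex $X$: vertices are the admissible sections $\sigma:W\to\mathcal H$ ($\sigma(\overline h)\in\overline h$ and $\sigma(\overline h)\not\subseteq\sigma(\overline k)^c$ for all walls $\overline h,\overline k$) lying in the connected component, of the graph joining sections differing on exactly one wall, which contains $\sigma_p$ ($\sigma_p(\overline h)$ = the half-space of $\overline h$ containing $p$); a unit $k$-cube is attached along the 1-skeleton-of-a-$k$-cube spanned by each vertex together with $k$ incident edges whose labelling walls pairwise cross. $G$ acts on sections by $(g\sigma)(\overline h)=g(\sigma(g^{-1}\overline h))$. *)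

(* Defs.v *)
From Stdlib Require Import Reals ZArith List Relations.
Open Scope R_scope.

(* A section sigma : W -> H is represented by the set of the chosen     *)
(* half-spaces (its image), containing exactly one of h, h^c for each h.*)

Definition compl {Y : Type} (h : Y -> Prop) : Y -> Prop := fun y => ~ h y.

Definition is_section {Y : Type} (H : (Y -> Prop) -> Prop)
    (S : (Y -> Prop) -> Prop) : Prop :=
  (forall h, S h -> H h) /\ (forall h, H h -> (S h <-> ~ S (compl h))).

(* sigma(h) is not contained in sigma(k)^c, i.e. they intersect *)
Definition admissible {Y : Type} (S : (Y -> Prop) -> Prop) : Prop :=
  forall h k, S h -> S k -> exists y, h y /\ k y.

Definition sigma_pt {Y : Type} (H : (Y -> Prop) -> Prop) (p : Y) :
    (Y -> Prop) -> Prop := fun h => H h /\ h p.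

Definition differ_one_wall {Y : Type} (S T : (Y -> Prop) -> Prop) : Prop :=
  exists h, S h /\ T (compl h) /\
    forall k, k <> h -> k <> compl h -> (S k <-> T k).

Definition adm_edge {Y : Type} (H : (Y -> Prop) -> Prop)
    (S T : (Y -> Prop) -> Prop) : Prop :=
  is_section H S /\ admissible S /\ is_section H T /\ admissible T /\
  differ_one_wall S T.

Definition vertexX {Y : Type} (H : (Y -> Prop) -> Prop) (p0 : Y)
    (S : (Y -> Prop) -> Prop) : Prop :=
  clos_refl_trans _ (adm_edge H) (sigma_pt H p0) S.

Definition cross {Y : Type} (h k : Y -> Prop) : Prop :=
  (exists y, h y /\ k y) /\ (exists y, h y /\ ~ k y) /\
  (exists y, ~ h y /\ k y) /\ (exists y, ~ h y /\ ~ k y).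

Definition flip {Y : Type} (S : (Y -> Prop) -> Prop) (l : list (Y -> Prop))
    (T : (Y -> Prop) -> Prop) : (Y -> Prop) -> Prop :=
  fun h => (S h /\ ~ (In h l /\ T h)) \/
           (exists k, In k l /\ T k /\ h = compl k).

(* vertex sets of cubes of X: a vertex S together with k incident edges
   (labelled by the walls of the distinct half-spaces in l, chosen by S)
   whose walls pairwise cross; the cube has vertex set all flips of S
   on subsets of these walls. *)
Definition isCubeX {Y : Type} (H : (Y -> Prop) -> Prop) (p0 : Y)
    (C : ((Y -> Prop) -> Prop) -> Prop) : Prop :=
  exists (S : (Y -> Prop) -> Prop) (l : list (Y -> Prop)),
    vertexX H p0 S /\ NoDup l /\ (forall h, In h l -> S h) /\
    (forall h k, In h l -> In k l -> h <> k -> cross h k) /\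
    (forall h, In h l -> vertexX H p0 (flip S l (fun k => k = h))) /\
    (forall S', C S' <-> exists T, S' = flip S l T).

(* A point (x1,x2) : R*R stands for the point (x1, x2, -x1-x2) of the    *)
(* plane x1+x2+x3 = 0 in Euclidean R^3 (a copy of E^2).                  *)

Definition pt := (R * R)%type.
Definition x1 (p : pt) : R := fst p.
Definition x2 (p : pt) : R := snd p.
Definition x3 (p : pt) : R := - fst p - snd p.

Definition dist2 (p q : pt) : R :=
  (x1 p - x1 q) ^ 2 + (x2 p - x2 q) ^ 2 + (x3 p - x3 q) ^ 2.

Definition interior (A : pt -> Prop) (p : pt) : Prop :=
  exists e, 0 < e /\ forall q, dist2 p q < e -> A q.

Inductive idx := I1 | I2 | I3.
Definition coord (i : idx) (p : pt) : R :=
  match i with I1 => x1 p | I2 => x2 p | I3 => x3 p end.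

(* The lines of the tiling are {coord i = k}, i in {1,2,3}, k in Z.
   Each line bounds the complementary pair {coord i < k} (open),
   {coord i >= k} (closed). *)
Definition halfLT (i : idx) (k : Z) : pt -> Prop := fun p => coord i p < IZR k.
Definition halfGE (i : idx) (k : Z) : pt -> Prop := fun p => IZR k <= coord i p.

Definition Htri (h : pt -> Prop) : Prop :=
  exists i k, h = halfLT i k \/ h = halfGE i k.

(* The reflections in the sides x1 = 0, x2 = 0, x3 = -1 of the tile with
   vertices (0,0,0), (0,1,-1), (1,0,-1). *)
Definition refl_a (p : pt) : pt := (- x1 p, - x3 p).
Definition refl_b (p : pt) : pt := (- x3 p, - x2 p).
Definition refl_c (p : pt) : pt := (1 - x2 p, 1 - x1 p).

Inductive inG : (pt -> pt) -> Prop :=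
| G_id : inG (fun p => p)
| G_a g : inG g -> inG (fun p => refl_a (g p))
| G_b g : inG g -> inG (fun p => refl_b (g p))
| G_c g : inG g -> inG (fun p => refl_c (g p)).

Definition image {Y : Type} (g : Y -> Y) (h : Y -> Prop) : Y -> Prop :=
  fun y => exists x, h x /\ g x = y.

(* Induced action on sections: (g S) chooses in each wall the half-space
   h' with the same interior as g(h) for some chosen h in S
   (half-spaces are identified with g-images up to their boundary line). *)
Definition act_section (H : (pt -> Prop) -> Prop) (g : pt -> pt)
    (S : (pt -> Prop) -> Prop) : (pt -> Prop) -> Prop :=
  fun h' => H h' /\ exists h, S h /\
    forall p, interior h' p <-> interior (image g h) p.

Definition Z3 := (Z * Z * Z)%type.
Definition R3 := (R * R * R)%type.

Definition isCubeZ3 (C : Z3 -> Prop) : Prop :=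
  exists v u : Z3,
    (0 <= (fst (fst u)) <= 1)%Z /\ (0 <= (snd (fst u)) <= 1)%Z /\ (0 <= (snd u) <= 1)%Z /\
    forall z, C z <->
      (((fst (fst v)) <= (fst (fst z)) <= (fst (fst v)) + (fst (fst u)))%Z /\
       ((snd (fst v)) <= (snd (fst z)) <= (snd (fst v)) + (snd (fst u)))%Z /\
       ((snd v) <= (snd z) <= (snd v) + (snd u))%Z).

Definition ofZ3 (z : Z3) : R3 := (IZR (fst (fst z)), IZR (snd (fst z)), IZR (snd z)).

Definition comb3 (t : R) (x y : R3) : R3 :=
  (t * (fst (fst x)) + (1 - t) * (fst (fst y)), t * (snd (fst x)) + (1 - t) * (snd (fst y)),
   t * (snd x) + (1 - t) * (snd y)).

Definition affine3 (f : R3 -> R3) : Prop :=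
  forall x y t, f (comb3 t x y) = comb3 t (f x) (f y).

Definition sum3 (x : R3) : R := (fst (fst x)) + (snd (fst x)) + (snd x).

Definition bounded3 (K : R3 -> Prop) : Prop :=
  exists M, forall x, K x ->
    Rabs (fst (fst x)) <= M /\ Rabs (snd (fst x)) <= M /\ Rabs (snd x) <= M.

(* Main.v *)
Require Import Defs.
From Stdlib Require Import Reals ZArith List Relations.
From Stdlib Require Import FinFun Lra Lia ClassicalEpsilon FunctionalExtensionality PropExtensionality Classical.
Open Scope R_scope.

Lemma pext {A:Type} (P Q : A -> Prop) : (forall x, P x <-> Q x) -> P = Q.
Proof. intro H; apply functional_extensionality; intro x; apply propositional_extensionality; apply H. Qed.

Definition idx_dec (i j : idx) : {i = j} + {i <> j}.
Proof. decide equality. Defined.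

Definition hs (i:idx) (k:Z) (c:bool) : pt -> Prop := if c then halfGE i k else halfLT i k.
Definition cl (c:bool) (k r:R) : Prop := if c then k <= r else r < k.
Definition op (u:bool) (k r:R) : Prop := if u then k < r else r < k.

Lemma hs_cl i k c p : hs i k c p <-> cl c (IZR k) (coord i p).
Proof. destruct c; reflexivity. Qed.

Lemma Htri_hs h : Htri h <-> exists i k c, h = hs i k c.
Proof. split.
- intros [i [k [H|H]]]; exists i, k; [exists false|exists true]; exact H.
- intros [i [k [c H]]]; exists i, k; destruct c; [right|left]; exact H.
Qed.

Lemma compl_hs i k c : compl (hs i k c) = hs i k (negb c).
Proof. apply pext; intro p; destruct c; unfold compl, hs, halfGE, halfLT; simpl;
  split; intro H; try intro H'; lra. Qed.

Lemma pt2 i j r s : i <> j -> exists p, coord i p = r /\ coord j p = s.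
Proof.
  destruct i, j; intro H; try (exfalso; apply H; reflexivity).
  - exists (r, s); unfold coord, x1, x2, x3; simpl; split; ring.
  - exists (r, -r-s); unfold coord, x1, x2, x3; simpl; split; ring.
  - exists (s, r); unfold coord, x1, x2, x3; simpl; split; ring.
  - exists (-r-s, r); unfold coord, x1, x2, x3; simpl; split; ring.
  - exists (s, -r-s); unfold coord, x1, x2, x3; simpl; split; ring.
  - exists (-r-s, s); unfold coord, x1, x2, x3; simpl; split; ring.
Qed.

Lemma pt1 i r : exists p, coord i p = r.
Proof.
  assert (exists j, i <> j) as [j Hj] by (destruct i; [exists I2|exists I1|exists I1]; discriminate).
  destruct (pt2 i j r 0 Hj) as [p [Hp _]]; exists p; exact Hp.
Qed.

Lemma diff_fam (P Q : R -> Prop) i j : i <> j -> (exists r, P r) -> (exists s, ~ Q s) ->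
  ~ (forall p, P (coord i p) <-> Q (coord j p)).
Proof.
  intros Hij [r Hr] [s Hs] H. destruct (pt2 i j r s Hij) as [p [H1 H2]].
  apply Hs; rewrite <- H2; apply H; rewrite H1; exact Hr.
Qed.

Lemma cl_in c k : exists r, cl c k r.
Proof. destruct c; simpl; [exists k | exists (k-1)]; lra. Qed.
Lemma cl_out c k : exists r, ~ cl c k r.
Proof. destruct c; simpl; [exists (k-1) | exists k]; lra. Qed.
Lemma op_in c k : exists r, op c k r.
Proof. destruct c; simpl; [exists (k+1) | exists (k-1)]; lra. Qed.
Lemma op_out c k : exists r, ~ op c k r.
Proof. destruct c; simpl; [exists k | exists k]; lra. Qed.

Lemma cl_inj c d k m : (forall r, cl c k r <-> cl d m r) -> c = d /\ k = m.
Proof.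
  intros H; destruct c, d; simpl in H.
  - split; auto. pose proof (proj1 (H k) (Rle_refl k)). pose proof (proj2 (H m) (Rle_refl m)). lra.
  - exfalso. destruct (H (Rmax k m)) as [H1 _]. pose proof (H1 (Rmax_l k m)). pose proof (Rmax_r k m). lra.
  - exfalso. destruct (H (Rmax k m)) as [_ H1]. pose proof (H1 (Rmax_r k m)). pose proof (Rmax_l k m). lra.
  - split; auto. destruct (Rtotal_order k m) as [h|[h|h]]; auto.
    + exfalso. pose proof (proj2 (H k) h). lra.
    + exfalso. pose proof (proj1 (H m) h). lra.
Qed.

Lemma op_inj c d k m : (forall r, op c k r <-> op d m r) -> c = d /\ k = m.
Proof.
  intros H; destruct c, d; simpl in H.
  - split; auto. destruct (Rtotal_order k m) as [h|[h|h]]; auto.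
    + exfalso. pose proof (proj1 (H m) h). lra.
    + exfalso. pose proof (proj2 (H k) h). lra.
  - exfalso. destruct (H (Rmax k m + 1)) as [H1 _]. pose proof (Rmax_l k m). pose proof (Rmax_r k m).
    assert (k < Rmax k m + 1) by lra. pose proof (H1 H3). lra.
  - exfalso. destruct (H (Rmax k m + 1)) as [_ H1]. pose proof (Rmax_l k m). pose proof (Rmax_r k m).
    assert (m < Rmax k m + 1) by lra. pose proof (H1 H3). lra.
  - split; auto. destruct (Rtotal_order k m) as [h|[h|h]]; auto.
    + exfalso. pose proof (proj2 (H k) h). lra.
    + exfalso. pose proof (proj1 (H m) h). lra.
Qed.

Lemma hs_inj i k c j m d : hs i k c = hs j m d -> i = j /\ k = m /\ c = d.
Proof.
  intro H.
  assert (H0 : forall p, cl c (IZR k) (coord i p) <-> cl d (IZR m) (coord j p))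
    by (intro p; rewrite <- !hs_cl, H; tauto).
  destruct (idx_dec i j) as [e|ne].
  - subst j. assert (forall r, cl c (IZR k) r <-> cl d (IZR m) r).
    { intro r; destruct (pt1 i r) as [p Hp]; rewrite <- Hp; apply H0. }
    apply cl_inj in H1. destruct H1 as [-> H1]. apply eq_IZR in H1. auto.
  - exfalso. apply (diff_fam _ _ i j ne (cl_in c (IZR k)) (cl_out d (IZR m)) H0).
Qed.

Definition zc (z:Z3) (i:idx) : Z := match i with I1 => fst (fst z) | I2 => snd (fst z) | I3 => snd z end.
Definition mkZ3 (f: idx -> Z) : Z3 := ((f I1, f I2), f I3).
Lemma zc_mk f i : zc (mkZ3 f) i = f i.
Proof. destruct i; reflexivity. Qed.
Lemma Z3_ext z w : (forall i, zc z i = zc w i) -> z = w.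
Proof. destruct z as [[a b] c], w as [[a' b'] c']; intro H.
  generalize (H I1) (H I2) (H I3); simpl; intros -> -> ->; reflexivity. Qed.

Definition sec (z:Z3) : (pt -> Prop) -> Prop := fun h => exists i k, h = hs i k (Z.leb k (zc z i)).

Lemma sec_hs z i k c : sec z (hs i k c) <-> c = Z.leb k (zc z i).
Proof. split.
  - intros [j [m H]]; apply hs_inj in H; destruct H as [-> [-> ->]]; reflexivity.
  - intros ->; exists i, k; reflexivity.
Qed.

Lemma sec_form z h : sec z h -> exists i k c, h = hs i k c.
Proof. intros [i [k ->]]; eauto. Qed.

Lemma sec_ext (T : (pt->Prop)->Prop) z : (forall h, T h -> exists i k c, h = hs i k c) ->
  (forall i k c, T (hs i k c) <-> c = Z.leb k (zc z i)) -> T = sec z.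
Proof. intros H1 H2; apply pext; intro h; split.
  - intro Th; destruct (H1 h Th) as [i [k [c ->]]]; apply sec_hs, H2, Th.
  - intros [i [k ->]]; apply H2; reflexivity.
Qed.

Lemma sec_inj z w : sec z = sec w -> z = w.
Proof. intro H; apply Z3_ext; intro i.
  assert (H1 : sec w (hs i (zc z i) true)) by (rewrite <- H; apply sec_hs; symmetry; apply Z.leb_refl).
  assert (H2 : sec z (hs i (zc w i) true)) by (rewrite H; apply sec_hs; symmetry; apply Z.leb_refl).
  apply sec_hs in H1; apply sec_hs in H2. symmetry in H1, H2. apply Z.leb_le in H1; apply Z.leb_le in H2. lia.
Qed.

Lemma floor_le x k : IZR k <= x <-> (k <= up x - 1)%Z.
Proof. destruct (archimed x) as [Ha Hb]. split; intro H.
  - assert (k < up x)%Z by (apply lt_IZR; lra). lia.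
  - apply IZR_le in H. rewrite minus_IZR in H. lra.
Qed.

Lemma hs_mid i k c n p : coord i p = IZR n + /2 -> (hs i k c p <-> c = Z.leb k n).
Proof. intro H; rewrite hs_cl, H.
  destruct (Z.leb_spec k n) as [h|h].
  - apply IZR_le in h. destruct c; simpl; split; intro; try lra; try discriminate; reflexivity.
  - assert (IZR (n+1) <= IZR k) by (apply IZR_le; lia). rewrite plus_IZR in H0.
    destruct c; simpl; split; intro; try lra; try discriminate; reflexivity.
Qed.

Lemma sigma_sec p0 : sigma_pt Htri p0 = sec (mkZ3 (fun i => (up (coord i p0) - 1)%Z)).
Proof. apply sec_ext.
  - intros h [Hh _]; apply Htri_hs; exact Hh.
  - intros i k c. rewrite zc_mk. unfold sigma_pt. rewrite hs_cl.
    assert (Hh : Htri (hs i k c)) by (apply Htri_hs; eauto).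
    pose proof (floor_le (coord i p0) k).
    destruct (Z.leb_spec k (up (coord i p0) - 1)) as [h|h]; destruct c; simpl.
    + split; intro; auto. split; auto. apply H; exact h.
    + split; intro H0; [exfalso|discriminate]. destruct H0 as [_ H0].
      assert (IZR k <= coord i p0) by (apply H; exact h). lra.
    + split; intro H0; [exfalso|discriminate]. destruct H0 as [_ H0]. apply H in H0. lia.
    + split; intro; auto. split; auto.
      assert (~ IZR k <= coord i p0) by (intro H1; apply H in H1; lia). lra.
Qed.

Lemma sec_section z : is_section Htri (sec z).
Proof. split.
  - intros h Hh; apply Htri_hs; apply sec_form with z; exact Hh.
  - intros h Hh; apply Htri_hs in Hh; destruct Hh as [i [k [c ->]]].
    rewrite compl_hs, !sec_hs. destruct c, (Z.leb k (zc z i)); simpl; split; intros; try congruence.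
Qed.

Lemma sec_adm z : admissible (sec z).
Proof. intros h k [i [a ->]] [j [b ->]].
  destruct (idx_dec i j) as [e|ne].
  - subst j. destruct (pt1 i (IZR (zc z i) + /2)) as [p Hp]. exists p.
    split; apply (hs_mid _ _ _ _ _ Hp); reflexivity.
  - destruct (pt2 i j (IZR (zc z i) + /2) (IZR (zc z j) + /2) ne) as [p [Hp Hq]]. exists p.
    split; [apply (hs_mid _ _ _ _ _ Hp) | apply (hs_mid _ _ _ _ _ Hq)]; reflexivity.
Qed.

Lemma sec_agree1 z w i k0 :
  (forall j m, (j <> i \/ m <> k0) -> Z.leb m (zc z j) = Z.leb m (zc w j)) ->
  forall h, h <> hs i k0 true -> h <> hs i k0 false -> sec z h -> sec w h.
Proof.
  intros H h H1 H2 [j [m ->]]; exists j, m.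
  destruct (idx_dec j i), (Z.eq_dec m k0); subst.
  - exfalso. destruct (Z.leb k0 (zc z i)); auto.
  - rewrite H; auto.
  - rewrite H; auto.
  - rewrite H; auto.
Qed.

Lemma sec_agree z w i k0 :
  (forall j m, (j <> i \/ m <> k0) -> Z.leb m (zc z j) = Z.leb m (zc w j)) ->
  forall h, h <> hs i k0 true -> h <> hs i k0 false -> (sec z h <-> sec w h).
Proof.
  intros H h H1 H2; split; apply sec_agree1 with i k0; auto.
  intros j m Hjm; symmetry; auto.
Qed.

Definition shift (z:Z3) (i:idx) (d:Z) : Z3 :=
  mkZ3 (fun j => if idx_dec j i then (zc z j + d)%Z else zc z j).
Lemma zc_shift_eq z i d : zc (shift z i d) i = (zc z i + d)%Z.
Proof. unfold shift; rewrite zc_mk; destruct (idx_dec i i); congruence. Qed.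
Lemma zc_shift_ne z i d j : j <> i -> zc (shift z i d) j = zc z j.
Proof. intro H; unfold shift; rewrite zc_mk; destruct (idx_dec j i); congruence. Qed.

Lemma sec_edge z w i : (forall j, j <> i -> zc w j = zc z j) ->
  (zc w i = zc z i + 1 \/ zc w i = zc z i - 1)%Z -> adm_edge Htri (sec z) (sec w).
Proof.
  intros Hj Hi. unfold adm_edge. split; [apply sec_section|]. split; [apply sec_adm|].
  split; [apply sec_section|]. split; [apply sec_adm|].
  destruct Hi as [Hi|Hi].
  - exists (hs i (zc z i + 1) false). split; [|split].
    + apply sec_hs. symmetry; apply Z.leb_gt; lia.
    + rewrite compl_hs; apply sec_hs; simpl; symmetry; apply Z.leb_le; lia.
    + intros k E1 E2. rewrite compl_hs in E2. simpl in E2.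
      apply sec_agree with i (zc z i + 1)%Z; auto.
      intros j m [Hji|Hm].
      * rewrite Hj; auto.
      * destruct (idx_dec j i); [subst|rewrite Hj; auto].
        rewrite Hi. destruct (Z.leb_spec m (zc z i)), (Z.leb_spec m (zc z i + 1)); auto; lia.
  - exists (hs i (zc z i) true). split; [|split].
    + apply sec_hs. symmetry; apply Z.leb_le; lia.
    + rewrite compl_hs; apply sec_hs; simpl; symmetry; apply Z.leb_gt; lia.
    + intros k E1 E2. rewrite compl_hs in E2. simpl in E2.
      apply sec_agree with i (zc z i); auto.
      intros j m [Hji|Hm].
      * rewrite Hj; auto.
      * destruct (idx_dec j i); [subst|rewrite Hj; auto].
        rewrite Hi. destruct (Z.leb_spec m (zc z i)), (Z.leb_spec m (zc z i - 1)); auto; lia.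
Qed.

Notation crt := (clos_refl_trans _ (adm_edge Htri)).

Lemma step_shift z i d : (d = 1 \/ d = -1)%Z -> crt (sec z) (sec (shift z i d)).
Proof. intro H. apply rt_step. apply sec_edge with i.
  - intros j Hj; apply zc_shift_ne; auto.
  - rewrite zc_shift_eq; lia.
Qed.

Lemma shift_nat z i (e:Z) (n:nat) : (e = 1 \/ e = -1)%Z ->
  crt (sec z) (sec (shift z i (e * Z.of_nat n))).
Proof. intro He. induction n.
  - replace (shift z i (e * Z.of_nat 0)) with z; [apply rt_refl|].
    apply Z3_ext; intro j. destruct (idx_dec j i); [subst; rewrite zc_shift_eq; lia|rewrite zc_shift_ne; auto].
  - apply rt_trans with (sec (shift z i (e * Z.of_nat n))); auto.
    replace (shift z i (e * Z.of_nat (S n))) with (shift (shift z i (e * Z.of_nat n)) i e).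
    + apply step_shift; auto.
    + apply Z3_ext; intro j. destruct (idx_dec j i).
      * subst; rewrite !zc_shift_eq; lia.
      * rewrite !zc_shift_ne; auto.
Qed.

Lemma shift_Z z i d : crt (sec z) (sec (shift z i d)).
Proof. destruct (Z_le_gt_dec 0 d).
  - replace d with (1 * Z.of_nat (Z.to_nat d))%Z by lia. apply shift_nat; auto.
  - replace d with (-1 * Z.of_nat (Z.to_nat (-d)))%Z by lia. apply shift_nat; auto.
Qed.

Lemma reach z w : crt (sec z) (sec w).
Proof.
  pose (w1 := shift z I1 (zc w I1 - zc z I1)).
  pose (w2 := shift w1 I2 (zc w I2 - zc z I2)).
  apply rt_trans with (sec w1); [apply shift_Z|].
  apply rt_trans with (sec w2); [apply shift_Z|].
  replace w with (shift w2 I3 (zc w I3 - zc z I3)); [apply shift_Z|].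
  apply Z3_ext; intro j; unfold w2, w1; destruct j;
   repeat first [rewrite zc_shift_eq | rewrite zc_shift_ne by discriminate]; lia.
Qed.

Lemma fin_sec T z i k c :
  (forall h, T h -> exists i k c, h = hs i k c) ->
  (forall j m d, (j <> i \/ m <> k) -> (T (hs j m d) <-> d = Z.leb m (zc z j))) ->
  (forall d, T (hs i k d) <-> d = negb c) ->
  forall w, (forall j, j <> i -> zc w j = zc z j) ->
  (forall m, m <> k -> Z.leb m (zc w i) = Z.leb m (zc z i)) -> Z.leb k (zc w i) = negb c ->
  T = sec w.
Proof.
  intros H1 MT MTk w Hj Hm Hk. apply sec_ext; auto. intros j m d.
  destruct (idx_dec j i), (Z.eq_dec m k); subst.
  - rewrite MTk, Hk; tauto.
  - rewrite MT, Hm; auto; tauto.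
  - rewrite MT, Hj; auto; tauto.
  - rewrite MT, Hj; auto; tauto.
Qed.

Lemma edge_sec z T : adm_edge Htri (sec z) T -> exists w, T = sec w.
Proof.
  intros [_ [_ [HsT [HaT [h [Hh [Hc Hk]]]]]]].
  destruct (sec_form _ _ Hh) as [i [k [c ->]]].
  apply sec_hs in Hh. rewrite compl_hs in Hc.
  assert (MT : forall j m d, (j <> i \/ m <> k) -> (T (hs j m d) <-> d = Z.leb m (zc z j))).
  { intros j m d Hjm. rewrite <- sec_hs. symmetry. apply Hk.
    - intro E; apply hs_inj in E; destruct E as [E1 [E2 _]]; destruct Hjm; auto.
    - rewrite compl_hs. intro E; apply hs_inj in E; destruct E as [E1 [E2 _]]; destruct Hjm; auto. }
  assert (MTk : forall d, T (hs i k d) <-> d = negb c).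
  { intro d. destruct HsT as [_ HsT]. assert (Htri (hs i k d)) by (apply Htri_hs; eauto).
    specialize (HsT _ H). rewrite compl_hs in HsT.
    destruct d, c; simpl in *; split; intro H0; try reflexivity; try discriminate; try exact Hc;
      exfalso; apply (proj1 HsT H0); exact Hc. }
  assert (HT : forall h, T h -> exists i k c, h = hs i k c).
  { intros h0 H0. apply Htri_hs. apply (proj1 HsT); exact H0. }
  destruct (Z.leb_spec k (zc z i)) as [hk|hk]; subst c.
  - assert (k = zc z i).
    { destruct (Z.eq_dec k (zc z i)); auto. exfalso.
      assert (T (hs i (k+1) true)) by (apply MT; [right; lia | symmetry; apply Z.leb_le; lia]).
      destruct (HaT _ _ Hc H) as [y [H1 H2]]. unfold hs, halfLT, halfGE in *. simpl in *.
      rewrite plus_IZR in H2. lra. }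
    exists (shift z i (-1)). apply (fin_sec T z i k true); auto.
    + intros j Hj; apply zc_shift_ne; auto.
    + intros m Hm; rewrite zc_shift_eq. destruct (Z.leb_spec m (zc z i)), (Z.leb_spec m (zc z i + -1)); auto; lia.
    + rewrite zc_shift_eq. simpl. apply Z.leb_gt; lia.
  - assert (k = zc z i + 1)%Z.
    { destruct (Z.eq_dec k (zc z i + 1)); auto. exfalso.
      assert (T (hs i (k-1) false)) by (apply MT; [right; lia | symmetry; apply Z.leb_gt; lia]).
      destruct (HaT _ _ Hc H) as [y [H1 H2]]. unfold hs, halfLT, halfGE in *. simpl in *.
      rewrite minus_IZR in H2. lra. }
    exists (shift z i 1). apply (fin_sec T z i k false); auto.
    + intros j Hj; apply zc_shift_ne; auto.
    + intros m Hm; rewrite zc_shift_eq. destruct (Z.leb_spec m (zc z i)), (Z.leb_spec m (zc z i + 1)); auto; lia.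
    + rewrite zc_shift_eq. simpl. apply Z.leb_le; lia.
Qed.

Lemma vertex_sec p0 S : vertexX Htri p0 S <-> exists z, S = sec z.
Proof. unfold vertexX. rewrite sigma_sec. split.
  - intro H. remember (sec (mkZ3 (fun i => (up (coord i p0) - 1)%Z))) as S0.
    assert (E : exists z, S0 = sec z) by eauto. clear HeqS0.
    induction H.
    + destruct E as [z ->]. apply edge_sec with z; auto.
    + auto.
    + auto.
  - intros [z ->]. apply reach.
Qed.

Lemma vertex_of p0 z : vertexX Htri p0 (sec z).
Proof. apply vertex_sec; eauto. Qed.

Lemma dist_coord i p q : (coord i p - coord i q)^2 <= dist2 p q.
Proof. unfold dist2; destruct i; simpl coord;
  pose proof (pow2_ge_0 (x1 p - x1 q)); pose proof (pow2_ge_0 (x2 p - x2 q));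
  pose proof (pow2_ge_0 (x3 p - x3 q)); lra. Qed.

Lemma ptshift i (d:R) p : exists q, coord i q = coord i p + d /\ dist2 p q = 2 * d^2.
Proof. destruct p as [a b]; destruct i; [exists (a+d,b) | exists (a, b+d) | exists (a-d, b)];
  unfold dist2, coord, x1, x2, x3; simpl; split; ring. Qed.

Lemma small_dl e : 0 < e -> exists dl, 0 < dl /\ 2 * dl^2 < e.
Proof. intro He. exists (Rmin 1 (e/4)).
  assert (0 < Rmin 1 (e/4)) by (apply Rmin_pos; lra).
  pose proof (Rmin_l 1 (e/4)). pose proof (Rmin_r 1 (e/4)).
  split; auto. set (dl := Rmin 1 (e/4)) in *.
  assert (dl*dl <= dl * (e/4)) by (apply Rmult_le_compat_l; lra).
  assert (dl * (e/4) <= 1 * (e/4)) by (apply Rmult_le_compat_r; lra).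
  simpl. lra.
Qed.

Lemma int_upper (A : pt -> Prop) i r p : (forall q, r < coord i q -> A q) ->
  (forall q, A q -> r <= coord i q) -> (Defs.interior A p <-> r < coord i p).
Proof. intros H1 H2; split.
  - intros [e [He Hb]]. destruct (Rlt_or_le r (coord i p)) as [h|h]; auto. exfalso.
    destruct (small_dl e He) as [dl [Hd1 Hd2]].
    destruct (ptshift i (-dl) p) as [q [Hq1 Hq2]].
    assert (dist2 p q < e) by (rewrite Hq2; replace ((-dl)^2) with (dl^2) by ring; lra).
    pose proof (H2 q (Hb q H)). lra.
  - intro h. exists ((coord i p - r)^2). split; [apply pow_lt; lra|]. intros q Hq. apply H1.
    pose proof (dist_coord i p q). destruct (Rlt_or_le r (coord i q)) as [h'|h']; auto. exfalso.
    assert ((coord i p - r)^2 <= (coord i p - coord i q)^2) by (apply pow_incr; lra). lra.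
Qed.

Lemma int_lower (A : pt -> Prop) i r p : (forall q, coord i q < r -> A q) ->
  (forall q, A q -> coord i q <= r) -> (Defs.interior A p <-> coord i p < r).
Proof. intros H1 H2; split.
  - intros [e [He Hb]]. destruct (Rlt_or_le (coord i p) r) as [h|h]; auto. exfalso.
    destruct (small_dl e He) as [dl [Hd1 Hd2]].
    destruct (ptshift i dl p) as [q [Hq1 Hq2]].
    assert (dist2 p q < e) by (rewrite Hq2; lra).
    pose proof (H2 q (Hb q H)). lra.
  - intro h. exists ((r - coord i p)^2). split; [apply pow_lt; lra|]. intros q Hq. apply H1.
    pose proof (dist_coord i p q). destruct (Rlt_or_le (coord i q) r) as [h'|h']; auto. exfalso.
    assert ((r - coord i p)^2 <= (coord i q - coord i p)^2) by (apply pow_incr; lra).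
    replace ((coord i q - coord i p)^2) with ((coord i p - coord i q)^2) in H0 by ring. lra.
Qed.

Lemma interior_ext (A B : pt -> Prop) p : (forall q, A q <-> B q) -> (Defs.interior A p <-> Defs.interior B p).
Proof. intro H; split; intros [e [He Hb]]; exists e; split; auto; intros q Hq; apply H; auto. Qed.

Lemma int_hs i k c p : Defs.interior (hs i k c) p <-> op c (IZR k) (coord i p).
Proof. destruct c; simpl; [apply int_upper | apply int_lower]; intros q; unfold hs, halfGE, halfLT; simpl; lra. Qed.

Definition sg (s:bool) (r:R) : R := if s then r else - r.
Definition FormC (g : pt -> pt) (s:bool) (pi : idx -> idx) (t : idx -> Z) :=
  forall i p, coord i (g p) = sg s (coord (pi i) p) + IZR (t i).
Definition PermOK (pi : idx -> idx) := (forall i, exists j, pi j = i) /\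
  (forall f : idx -> R, f (pi I1) + f (pi I2) + f (pi I3) = f I1 + f I2 + f I3).
Definition Dat := (bool * (idx -> idx) * (idx -> Z))%type.
Definition Form (g : pt -> pt) (d : Dat) : Prop :=
  match d with (s, pi, t) => PermOK pi /\ (t I1 + t I2 + t I3 = 0)%Z /\ FormC g s pi t end.

Lemma form_gen (r : pt -> pt) (sig : idx -> idx) (tr : idx -> Z) g s pi t :
  (forall q i, coord i (r q) = - coord (sig i) q + IZR (tr i)) -> PermOK sig ->
  (tr I1 + tr I2 + tr I3 = 0)%Z ->
  Form g (s, pi, t) -> Form (fun p => r (g p)) (negb s, fun i => pi (sig i), fun i => (tr i - t (sig i))%Z).
Proof.
  intros Hr [Hs1 Hs2] Htr [[Hp1 Hp2] [Ht Hg]]. split; [split|split].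
  - intro i. destruct (Hp1 i) as [j <-]. destruct (Hs1 j) as [j' <-]. eauto.
  - intro f. rewrite (Hs2 (fun i => f (pi i))). apply Hp2.
  - assert (Hz : (t (sig I1) + t (sig I2) + t (sig I3) = t I1 + t I2 + t I3)%Z)
      by (apply eq_IZR; rewrite !plus_IZR; apply (Hs2 (fun i => IZR (t i)))). lia.
  - intros i p. rewrite Hr, Hg. destruct s; simpl; rewrite minus_IZR; ring.
Qed.

Definition sa (i:idx) : idx := match i with I1 => I1 | I2 => I3 | I3 => I2 end.
Definition sb (i:idx) : idx := match i with I1 => I3 | I2 => I2 | I3 => I1 end.
Definition sc (i:idx) : idx := match i with I1 => I2 | I2 => I1 | I3 => I3 end.
Definition tc (i:idx) : Z := match i with I1 => 1%Z | I2 => 1%Z | I3 => (-2)%Z end.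

Lemma ra_c q i : coord i (refl_a q) = - coord (sa i) q + IZR ((fun _ => 0%Z) i).
Proof. destruct i; unfold refl_a, coord, x1, x2, x3; simpl; ring. Qed.
Lemma rb_c q i : coord i (refl_b q) = - coord (sb i) q + IZR ((fun _ => 0%Z) i).
Proof. destruct i; unfold refl_b, coord, x1, x2, x3; simpl; ring. Qed.
Lemma rc_c q i : coord i (refl_c q) = - coord (sc i) q + IZR (tc i).
Proof. destruct i; unfold refl_c, coord, x1, x2, x3; simpl; ring. Qed.

Lemma perm_sa : PermOK sa.
Proof. split; [intro i; destruct i; [exists I1|exists I3|exists I2]; reflexivity | intro f; simpl; ring]. Qed.
Lemma perm_sb : PermOK sb.
Proof. split; [intro i; destruct i; [exists I3|exists I2|exists I1]; reflexivity | intro f; simpl; ring]. Qed.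
Lemma perm_sc : PermOK sc.
Proof. split; [intro i; destruct i; [exists I2|exists I1|exists I3]; reflexivity | intro f; simpl; ring]. Qed.

Lemma inv_a y : refl_a (refl_a y) = y.
Proof. destruct y; unfold refl_a, x1, x2, x3; simpl; f_equal; ring. Qed.
Lemma inv_b y : refl_b (refl_b y) = y.
Proof. destruct y; unfold refl_b, x1, x2, x3; simpl; f_equal; ring. Qed.
Lemma inv_c y : refl_c (refl_c y) = y.
Proof. destruct y; unfold refl_c, x1, x2, x3; simpl; f_equal; ring. Qed.

Lemma inG_form g : inG g -> (exists d, Form g d) /\ (forall y, exists x, g x = y).
Proof.
  induction 1 as [|g _ [[[[s pi] t] Hd] Hs]|g _ [[[[s pi] t] Hd] Hs]|g _ [[[[s pi] t] Hd] Hs]].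
  - split.
    + exists (true, fun i => i, fun _ => 0%Z). split; [split|split].
      * intro i; exists i; reflexivity.
      * intro f; reflexivity.
      * reflexivity.
      * intros i p; simpl; ring.
    + intro y; exists y; reflexivity.
  - split.
    + eexists. apply form_gen; [apply ra_c|apply perm_sa|reflexivity|exact Hd].
    + intro y. destruct (Hs (refl_a y)) as [x Hx]. exists x. rewrite Hx; apply inv_a.
  - split.
    + eexists. apply form_gen; [apply rb_c|apply perm_sb|reflexivity|exact Hd].
    + intro y. destruct (Hs (refl_b y)) as [x Hx]. exists x. rewrite Hx; apply inv_b.
  - split.
    + eexists. apply form_gen; [apply rc_c|apply perm_sc|reflexivity|exact Hd].
    + intro y. destruct (Hs (refl_c y)) as [x Hx]. exists x. rewrite Hx; apply inv_c.
Qed.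

Lemma form_uniq g s pi t s' pi' t' : FormC g s pi t -> FormC g s' pi' t' ->
  s = s' /\ (forall i, pi i = pi' i) /\ (forall i, t i = t' i).
Proof. intros H H'.
  assert (Ht : forall i, t i = t' i).
  { intro i. pose proof (H i (0,0)) as H0; pose proof (H' i (0,0)) as H1. rewrite H0 in H1.
    assert (E : forall j, coord j (0,0) = 0) by (intro j; destruct j; unfold coord, x1, x2, x3; simpl; ring).
    rewrite !E in H1. apply eq_IZR. destruct s, s'; simpl in H1; lra. }
  assert (Hc : forall i p, sg s (coord (pi i) p) = sg s' (coord (pi' i) p)).
  { intros i p; pose proof (H i p); pose proof (H' i p); rewrite Ht in H0; lra. }
  assert (key : forall i, s = s' /\ pi i = pi' i).
  { intro i. pose proof (Hc i (1,0)) as K1; pose proof (Hc i (0,1)) as K2.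
    destruct s, s', (pi i), (pi' i); unfold sg, coord, x1, x2, x3 in *; simpl in *;
      try (split; reflexivity); exfalso; lra. }
  split; [apply (key I1)|]. split; intro i; [apply (key i)| apply Ht].
Qed.

Lemma sg_inv s a b : sg s (sg s a + b - b) = a.
Proof. destruct s; simpl; ring. Qed.

Lemma img_iff g s pi t i k c y : (forall y, exists x, g x = y) -> FormC g s pi t ->
  (Defs.image g (hs (pi i) k c) y <-> cl c (IZR k) (sg s (coord i y - IZR (t i)))).
Proof. intros Hs Hf. split.
  - intros [x [Hx <-]]. rewrite Hf, sg_inv. rewrite hs_cl in Hx. exact Hx.
  - intro H. destruct (Hs y) as [x <-]. exists x; split; auto. rewrite hs_cl.
    rewrite Hf, sg_inv in H. exact H.
Qed.

Lemma int_img g s pi t i k c p : (forall y, exists x, g x = y) -> FormC g s pi t ->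
  (Defs.interior (Defs.image g (hs (pi i) k c)) p <->
   op (if s then c else negb c) (if s then IZR k + IZR (t i) else IZR (t i) - IZR k) (coord i p)).
Proof. intros Hs Hf.
  rewrite (interior_ext _ (fun y => cl c (IZR k) (sg s (coord i y - IZR (t i)))) p)
    by (intro q; apply img_iff; auto).
  destruct s, c; simpl; [apply int_upper | apply int_lower | apply int_lower | apply int_upper];
    intros q; simpl; lra.
Qed.

Definition zact (s:bool) (pi: idx->idx) (t: idx->Z) (z:Z3) : Z3 :=
  mkZ3 (fun i => if s then (zc z (pi i) + t i)%Z else (t i - 1 - zc z (pi i))%Z).

Lemma act_sec g s pi t z : (forall y, exists x, g x = y) -> PermOK pi -> FormC g s pi t ->
  act_section Htri g (sec z) = sec (zact s pi t z).
Proof.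
  intros Hs Hp Hf. apply sec_ext.
  - intros h [Hh _]. apply Htri_hs; auto.
  - intros i m d. unfold zact; rewrite zc_mk. unfold act_section. split.
    + intros [_ [h [Hh Hint]]]. destruct (sec_form _ _ Hh) as [j [k [c ->]]]. apply sec_hs in Hh.
      destruct (proj1 Hp j) as [i' <-].
      assert (Hi : forall p, op d (IZR m) (coord i p) <->
        op (if s then c else negb c) (if s then IZR k + IZR (t i') else IZR (t i') - IZR k) (coord i' p)).
      { intro p. rewrite <- int_hs, <- (int_img g s pi t i' k c p Hs Hf). apply Hint. }
      destruct (idx_dec i i') as [<-|ne].
      * assert (H : forall r, op d (IZR m) r <-> op (if s then c else negb c)
           (if s then IZR k + IZR (t i) else IZR (t i) - IZR k) r)
          by (intro r; destruct (pt1 i r) as [p <-]; apply Hi).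
        apply op_inj in H. destruct H as [H1 H2]. subst d.
        destruct s.
        -- rewrite <- plus_IZR in H2; apply eq_IZR in H2; subst m. rewrite Hh.
           destruct (Z.leb_spec k (zc z (pi i))), (Z.leb_spec (k + t i) (zc z (pi i) + t i)); auto; lia.
        -- rewrite <- minus_IZR in H2; apply eq_IZR in H2; subst m. rewrite Hh.
           destruct (Z.leb_spec k (zc z (pi i))), (Z.leb_spec (t i - k) (t i - 1 - zc z (pi i))); auto; lia.
      * exfalso. apply (diff_fam _ _ i i' ne (op_in d (IZR m)) (op_out _ _) Hi).
    + intro Hd. split; [apply Htri_hs; eauto|].
      exists (hs (pi i) (if s then m - t i else t i - m)%Z (if s then d else negb d)). split.
      * apply sec_hs. rewrite Hd. destruct s.
        -- destruct (Z.leb_spec m (zc z (pi i) + t i)), (Z.leb_spec (m - t i) (zc z (pi i))); auto; lia.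
        -- destruct (Z.leb_spec m (t i - 1 - zc z (pi i))), (Z.leb_spec (t i - m) (zc z (pi i))); auto; lia.
      * intro p. rewrite int_hs, (int_img g s pi t); auto. destruct s.
        -- rewrite minus_IZR. replace (IZR m - IZR (t i) + IZR (t i)) with (IZR m) by ring. tauto.
        -- rewrite Bool.negb_involutive, minus_IZR. replace (IZR (t i) - (IZR (t i) - IZR m)) with (IZR m) by ring. tauto.
Qed.

Definition rc (x:R3) (i:idx) : R := match i with I1 => fst (fst x) | I2 => snd (fst x) | I3 => snd x end.
Definition mkR3 (f : idx -> R) : R3 := ((f I1, f I2), f I3).
Lemma mkR3_ext f f' : (forall i, f i = f' i) -> mkR3 f = mkR3 f'.
Proof. intro H; unfold mkR3; rewrite !H; reflexivity. Qed.
Lemma rc_mk f i : rc (mkR3 f) i = f i.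
Proof. destruct i; reflexivity. Qed.
Lemma R3_eta x : x = mkR3 (rc x).
Proof. destruct x as [[a b] c]; reflexivity. Qed.

Definition Aof (d:Dat) (x:R3) : R3 := match d with (s, pi, t) =>
  mkR3 (fun i => if s then rc x (pi i) + IZR (t i) else IZR (t i) - 1 - rc x (pi i)) end.
Definition dflt : Dat := (true, fun i => i, fun _ => 0%Z).
Definition dat (g : pt -> pt) : Dat := epsilon (inhabits dflt) (Form g).
Definition Amap (g : pt -> pt) : R3 -> R3 := Aof (dat g).

Lemma dat_spec g : inG g -> Form g (dat g).
Proof. intro H. unfold dat. apply epsilon_spec. apply (inG_form g H). Qed.

Lemma Amap_eq g d : inG g -> Form g d -> forall x, Amap g x = Aof d x.
Proof. intros H Hd x. unfold Amap. pose proof (dat_spec g H) as H1.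
  destruct (dat g) as [[s pi] t]; destruct d as [[s' pi'] t'].
  destruct H1 as [_ [_ F]], Hd as [_ [_ F']].
  destruct (form_uniq _ _ _ _ _ _ _ F F') as [<- [Hp Ht]].
  unfold Aof. apply mkR3_ext; intro i. rewrite Hp, Ht; reflexivity.
Qed.

Lemma rc_ofZ3 z i : rc (ofZ3 z) i = IZR (zc z i).
Proof. destruct i; reflexivity. Qed.

Lemma ofZ3_act s pi t z : ofZ3 (zact s pi t z) = Aof (s, pi, t) (ofZ3 z).
Proof. unfold zact, Aof. rewrite (R3_eta (ofZ3 (mkZ3 _))). apply mkR3_ext; intro i.
  rewrite rc_ofZ3, zc_mk, rc_ofZ3. destruct s; [rewrite plus_IZR|rewrite !minus_IZR]; ring. Qed.

Lemma Aof_affine d : affine3 (Aof d).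
Proof. intros x y u. destruct d as [[s pi] t]. unfold Aof.
  assert (C : forall f g, comb3 u (mkR3 f) (mkR3 g) = mkR3 (fun i => u * f i + (1-u) * g i)) by reflexivity.
  rewrite C. apply mkR3_ext; intro i.
  assert (E : forall j, rc (comb3 u x y) j = u * rc x j + (1 - u) * rc y j) by (intro j; destruct j; reflexivity).
  rewrite E. destruct s; ring.
Qed.

Definition phi (S : (pt->Prop)->Prop) : Z3 := epsilon (inhabits (0%Z,0%Z,0%Z)) (fun z => S = sec z).
Lemma phi_sec z : phi (sec z) = z.
Proof. unfold phi. apply sec_inj. symmetry. apply (epsilon_spec (inhabits (0%Z,0%Z,0%Z)) (fun w => sec z = sec w)). eauto. Qed.

Definition GE (v:Z3) (i:idx) := hs i (zc v i) true.
Definition LT (v:Z3) (i:idx) := hs i (zc v i + 1)%Z false.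
Definition EM := excluded_middle_informative.

Definition dz (v:Z3) (l : list (pt -> Prop)) (T : (pt -> Prop) -> Prop) : Z3 :=
  mkZ3 (fun i => if EM (In (GE v i) l /\ T (GE v i)) then (zc v i - 1)%Z
                 else if EM (In (LT v i) l /\ T (LT v i)) then (zc v i + 1)%Z else zc v i).

Definition HL v (l : list (pt -> Prop)) := forall h, In h l -> exists i, h = GE v i \/ h = LT v i.
Definition HN v (l : list (pt -> Prop)) := forall i, ~ (In (GE v i) l /\ In (LT v i) l).

Lemma In_cases v l i k c : HL v l -> In (hs i k c) l ->
  (k = zc v i /\ c = true) \/ (k = (zc v i + 1)%Z /\ c = false).
Proof. intros Hl Hin. destruct (Hl _ Hin) as [j [E|E]]; unfold GE, LT in E; apply hs_inj in E;
  destruct E as [<- [-> ->]]; auto. Qed.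

Lemma flip_sec v l T : HL v l -> HN v l -> flip (sec v) l T = sec (dz v l T).
Proof.
  intros Hl Hn. apply sec_ext.
  - intros h [[Hh _]|[k0 [Hk0 [_ ->]]]].
    + apply sec_form with v; auto.
    + destruct (Hl _ Hk0) as [j [->| ->]]; unfold GE, LT; rewrite compl_hs; eauto.
  - intros i k c. unfold dz; rewrite zc_mk. unfold flip. rewrite sec_hs.
    destruct (EM (In (GE v i) l /\ T (GE v i))) as [[a1 a2]|na];
    [|destruct (EM (In (LT v i) l /\ T (LT v i))) as [[b1 b2]|nb]]; split.
    + intros [[Hc Hnot]|[k0 [Hk0 [HT E]]]].
      * destruct (Z.eq_dec k (zc v i)) as [->|ne].
        -- exfalso. rewrite Z.leb_refl in Hc. subst c. apply Hnot; split; auto.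
        -- rewrite Hc. destruct (Z.leb_spec k (zc v i)), (Z.leb_spec k (zc v i - 1)); auto; lia.
      * destruct (Hl _ Hk0) as [j [->| ->]]; unfold GE, LT in E; rewrite compl_hs in E;
          apply hs_inj in E; destruct E as [<- [-> ->]].
        -- symmetry; apply Z.leb_gt; lia.
        -- exfalso; apply (Hn i); split; auto.
    + intro Hc. destruct (Z.eq_dec k (zc v i)) as [->|ne].
      * right. exists (GE v i). split; auto. split; auto.
        unfold GE; rewrite compl_hs. rewrite Hc. assert (Z.leb (zc v i) (zc v i - 1) = false) by (apply Z.leb_gt; lia).
        rewrite H; reflexivity.
      * left. split.
        -- rewrite Hc. destruct (Z.leb_spec k (zc v i)), (Z.leb_spec k (zc v i - 1)); auto; lia.
        -- intros [Hin _]. destruct (In_cases _ _ _ _ _ Hl Hin) as [[-> ->]|[-> ->]];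
           try solve [exfalso; apply (Hn i); split; auto]; auto.
    + intros [[Hc Hnot]|[k0 [Hk0 [HT E]]]].
      * destruct (Z.eq_dec k (zc v i + 1)) as [->|ne].
        -- exfalso. assert (Z.leb (zc v i + 1) (zc v i) = false) by (apply Z.leb_gt; lia).
           rewrite H in Hc. subst c. apply Hnot; split; auto.
        -- rewrite Hc. destruct (Z.leb_spec k (zc v i)), (Z.leb_spec k (zc v i + 1)); auto; lia.
      * destruct (Hl _ Hk0) as [j [->| ->]]; unfold GE, LT in E; rewrite compl_hs in E;
          apply hs_inj in E; destruct E as [<- [-> ->]].
        -- exfalso; apply na; split; auto.
        -- symmetry; apply Z.leb_le; lia.
    + intro Hc. destruct (Z.eq_dec k (zc v i + 1)) as [->|ne].
      * right. exists (LT v i). split; auto. split; auto.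
        unfold LT; rewrite compl_hs. rewrite Hc. rewrite Z.leb_refl; reflexivity.
      * left. split.
        -- rewrite Hc. destruct (Z.leb_spec k (zc v i)), (Z.leb_spec k (zc v i + 1)); auto; lia.
        -- intros [Hin HT]. destruct (In_cases _ _ _ _ _ Hl Hin) as [[-> ->]|[-> ->]];
           try solve [exfalso; apply na; split; auto]; auto.
    + intros [[Hc Hnot]|[k0 [Hk0 [HT E]]]]; auto.
      destruct (Hl _ Hk0) as [j [->| ->]]; unfold GE, LT in E; rewrite compl_hs in E;
          apply hs_inj in E; destruct E as [<- [-> ->]].
      * exfalso; apply na; split; auto.
      * exfalso; apply nb; split; auto.
    + intro Hc. left. split; auto. intros [Hin HT].
      destruct (In_cases _ _ _ _ _ Hl Hin) as [[-> ->]|[-> ->]].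
      * apply na; split; auto.
      * apply nb; split; auto.
Qed.

Definition Pz (v:Z3) l (z:Z3) := forall i, zc z i = zc v i \/ (zc z i = zc v i - 1 /\ In (GE v i) l)%Z \/
   (zc z i = zc v i + 1 /\ In (LT v i) l)%Z.

Lemma GE_inj v i j : GE v i = GE v j -> i = j.
Proof. unfold GE; intro E; apply hs_inj in E; tauto. Qed.
Lemma LT_inj v i j : LT v i = LT v j -> i = j.
Proof. unfold LT; intro E; apply hs_inj in E; tauto. Qed.
Lemma GE_LT v i j : GE v i <> LT v j.
Proof. unfold GE, LT; intro E; apply hs_inj in E; destruct E as [_ [_ E]]; discriminate. Qed.

Lemma box_of v l : HL v l -> HN v l -> forall z, (exists T, z = dz v l T) <-> Pz v l z.
Proof. intros Hl Hn z. split.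
  - intros [T ->] i. unfold dz; rewrite zc_mk.
    destruct (EM (In (GE v i) l /\ T (GE v i))) as [[a1 a2]|na];
    [|destruct (EM (In (LT v i) l /\ T (LT v i))) as [[b1 b2]|nb]]; auto.
  - intro HP. exists (fun h => exists i, (h = GE v i /\ zc z i = zc v i - 1)%Z \/ (h = LT v i /\ zc z i = zc v i + 1)%Z).
    apply Z3_ext; intro i. unfold dz; rewrite zc_mk.
    destruct (EM _) as [[a1 [j [[E1 E2]|[E1 E2]]]]|na].
    + apply GE_inj in E1; subst; auto.
    + exfalso; apply (GE_LT _ _ _ E1).
    + destruct (EM _) as [[b1 [j [[E1 E2]|[E1 E2]]]]|nb].
      * exfalso; apply (GE_LT v j i); auto.
      * apply LT_inj in E1; subst; auto.
      * destruct (HP i) as [h|[[h g]|[h g]]]; auto.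
        -- exfalso; apply na; split; auto; exists i; auto.
        -- exfalso; apply nb; split; auto; exists i; auto.
Qed.

Lemma bnd a b k : (forall m, m <> k -> Z.leb m a = Z.leb m b) -> Z.leb k b = negb (Z.leb k a) ->
  k = a \/ k = (a + 1)%Z.
Proof. intros H1 H2. destruct (Z.leb_spec k a) as [h|h]; simpl in H2.
  - left. apply Z.leb_gt in H2. destruct (Z.eq_dec k a); auto. exfalso.
    specialize (H1 a ltac:(lia)). rewrite Z.leb_refl in H1. symmetry in H1. apply Z.leb_le in H1. lia.
  - right. apply Z.leb_le in H2. destruct (Z.eq_dec k (a+1)); auto. exfalso.
    specialize (H1 (a+1)%Z ltac:(lia)). assert (Z.leb (a+1) a = false) by (apply Z.leb_gt; lia).
    rewrite H in H1. symmetry in H1. apply Z.leb_gt in H1. lia.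
Qed.

Lemma boundary v l h w : In h l -> sec v h -> flip (sec v) l (fun k0 => k0 = h) = sec w ->
  exists i, h = GE v i \/ h = LT v i.
Proof.
  intros Hin Hh E. destruct Hh as [i [k ->]]. exists i.
  assert (M : forall m d, m <> k -> (sec w (hs i m d) <-> sec v (hs i m d))).
  { intros m d ne. rewrite <- E. unfold flip. split.
    - intros [[H _]|[k0 [_ [-> E2]]]]; auto. exfalso. rewrite compl_hs in E2.
      apply hs_inj in E2; destruct E2 as [_ [E2 _]]; auto.
    - intro H. left. split; auto. intros [_ E2]. apply hs_inj in E2; destruct E2 as [_ [E2 _]]; auto. }
  assert (Mk : sec w (hs i k (negb (Z.leb k (zc v i))))).
  { rewrite <- E. right. exists (hs i k (Z.leb k (zc v i))). split; auto. split; auto.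
    rewrite compl_hs; reflexivity. }
  apply sec_hs in Mk.
  assert (Hm : forall m, m <> k -> Z.leb m (zc v i) = Z.leb m (zc w i)).
  { intros m ne. symmetry. apply sec_hs. apply M; auto. apply sec_hs; reflexivity. }
  destruct (bnd _ _ _ Hm (eq_sym Mk)) as [->| ->].
  - left; unfold GE; rewrite Z.leb_refl; reflexivity.
  - right; unfold LT. assert (Z.leb (zc v i + 1) (zc v i) = false) by (apply Z.leb_gt; lia). rewrite H; reflexivity.
Qed.

Lemma hs_pick i a c (w : bool) : exists r, forall p, coord i p = r -> (hs i a c p <-> c = w).
Proof. destruct w.
  - exists (IZR a + /2). intros p Hp. rewrite (hs_mid _ _ _ _ _ Hp). rewrite Z.leb_refl; tauto.
  - exists (IZR (a - 1) + /2). intros p Hp. rewrite (hs_mid _ _ _ _ _ Hp).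
    assert (Z.leb a (a-1) = false) by (apply Z.leb_gt; lia). rewrite H; tauto.
Qed.

Lemma cross_diff i j a b c d : i <> j -> cross (hs i a c) (hs j b d).
Proof. intro ne.
  assert (Q : forall w1 w2, exists y, (hs i a c y <-> c = w1) /\ (hs j b d y <-> d = w2)).
  { intros w1 w2. destruct (hs_pick i a c w1) as [r1 H1]. destruct (hs_pick j b d w2) as [r2 H2].
    destruct (pt2 i j r1 r2 ne) as [p [P1 P2]]. exists p; split; auto. }
  unfold cross. split; [|split; [|split]].
  - destruct (Q c d) as [y [H1 H2]]; exists y; tauto.
  - destruct (Q c (negb d)) as [y [H1 H2]]; exists y. split; [tauto|]. rewrite H2; destruct d; discriminate.
  - destruct (Q (negb c) d) as [y [H1 H2]]; exists y. split; [|tauto]. rewrite H1; destruct c; discriminate.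
  - destruct (Q (negb c) (negb d)) as [y [H1 H2]]; exists y. rewrite H1, H2; destruct c, d; split; discriminate.
Qed.

Lemma no_cross_GE_LT v i : ~ cross (GE v i) (LT v i).
Proof. intros [_ [_ [_ [y [H1 H2]]]]]. unfold GE, LT, hs, halfGE, halfLT in *. simpl in *.
  rewrite plus_IZR in H2. lra. Qed.

Lemma cube_fwd p0 C : isCubeX Htri p0 C ->
  exists v l, HL v l /\ HN v l /\ forall S', C S' <-> exists T, S' = flip (sec v) l T.
Proof.
  intros [S [l [HS [_ [Hin [Hcr [Hfl HC]]]]]]].
  apply vertex_sec in HS. destruct HS as [v ->].
  assert (Hl : HL v l).
  { intros h Hh. destruct (proj1 (vertex_sec p0 _) (Hfl h Hh)) as [w Hw].
    apply (boundary v l h w); auto. }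
  exists v, l. split; auto. split; auto.
  intros i [H1 H2]. apply (no_cross_GE_LT v i). apply Hcr; auto. apply GE_LT.
Qed.

Lemma isCubeZ3_iff (D : Z3 -> Prop) : isCubeZ3 D <-> exists v u, (forall i, (0 <= zc u i <= 1)%Z) /\
   forall z, D z <-> forall i, (zc v i <= zc z i <= zc v i + zc u i)%Z.
Proof. unfold isCubeZ3; split.
  - intros [v [u [H1 [H2 [H3 H]]]]]; exists v, u; split; [intro i; destruct i; simpl; auto|].
    intro z; rewrite H; split; [intros [a [b c]] i; destruct i; simpl; auto|].
    intro F; pose proof (F I1); pose proof (F I2); pose proof (F I3); simpl in *; auto.
  - intros [v [u [H1 H]]]; exists v, u. pose proof (H1 I1); pose proof (H1 I2); pose proof (H1 I3).
    simpl in *. split; auto. split; auto. split; auto.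
    intro z; rewrite H; split; [intro F; pose proof (F I1); pose proof (F I2); pose proof (F I3); simpl in *; auto|].
    intros [a [b c]] i; destruct i; simpl; auto.
Qed.

Definition vlo v l : Z3 := mkZ3 (fun i => if EM (In (GE v i) l) then (zc v i - 1)%Z else zc v i).
Definition uu v l : Z3 := mkZ3 (fun i => if EM (In (GE v i) l \/ In (LT v i) l) then 1%Z else 0%Z).

Lemma pz_box v l z : HN v l -> (Pz v l z <-> forall i, (zc (vlo v l) i <= zc z i <= zc (vlo v l) i + zc (uu v l) i)%Z).
Proof. intro Hn. unfold vlo, uu. split; intros H i; specialize (H i); rewrite !zc_mk in *; pose proof (Hn i).
  - destruct H as [h|[[h g]|[h g]]];
    destruct (EM (In (GE v i) l)) as [a|na]; destruct (EM (In (GE v i) l \/ In (LT v i) l)) as [b|nb];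
    try lia; exfalso; tauto.
  - destruct (EM (In (GE v i) l)) as [a|na]; destruct (EM (In (GE v i) l \/ In (LT v i) l)) as [b|nb].
    + destruct (Z.eq_dec (zc z i) (zc v i)); [left; auto| right; left; split; auto; lia].
    + exfalso; tauto.
    + assert (In (LT v i) l) by tauto.
      destruct (Z.eq_dec (zc z i) (zc v i)); [left; auto| right; right; split; auto; lia].
    + left; lia.
Qed.

Lemma cube_iff p0 C : (forall S, C S -> vertexX Htri p0 S) ->
  (isCubeX Htri p0 C <-> isCubeZ3 (fun z => exists S, C S /\ phi S = z)).
Proof.
  intro HCv. split.
  - intro H. destruct (cube_fwd p0 C H) as [v [l [Hl [Hn HC]]]].
    apply isCubeZ3_iff. exists (vlo v l), (uu v l). split.
    + intro i; unfold uu; rewrite zc_mk; destruct (EM _); lia.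
    + intro z. rewrite <- pz_box by auto. rewrite <- box_of by auto. split.
      * intros [S [HS <-]]. apply HC in HS. destruct HS as [T ->].
        exists T. rewrite flip_sec, phi_sec by auto. reflexivity.
      * intros [T ->]. exists (flip (sec v) l T). split; [apply HC; eauto|].
        rewrite flip_sec, phi_sec; auto.
  - intro H. apply isCubeZ3_iff in H. destruct H as [v [u [Hu HD]]].
    set (l := map (LT v) (filter (fun i => Z.eqb (zc u i) 1) (I1 :: I2 :: I3 :: nil))).
    assert (Hlin : forall h, In h l <-> exists i, h = LT v i /\ zc u i = 1%Z).
    { intro h; unfold l; rewrite in_map_iff; split.
      - intros [i [<- Hi]]. apply filter_In in Hi. destruct Hi as [_ Hi]. apply Z.eqb_eq in Hi. eauto.
      - intros [i [-> Hi]]. exists i; split; auto. apply filter_In. split.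
        + destruct i; simpl; auto.
        + apply Z.eqb_eq; auto. }
    assert (Hl : HL v l).
    { intros h Hh. apply Hlin in Hh. destruct Hh as [i [-> _]]. eauto. }
    assert (Hn : HN v l).
    { intros i [H1 _]. apply Hlin in H1. destruct H1 as [j [E _]]. apply (GE_LT v i j E). }
    assert (HLT : forall i, In (LT v i) l <-> zc u i = 1%Z).
    { intro i; rewrite Hlin; split.
      - intros [j [E Hj]]. apply LT_inj in E. subst; auto.
      - intro; eauto. }
    assert (HPB : forall z, Pz v l z <-> forall i, (zc v i <= zc z i <= zc v i + zc u i)%Z).
    { intro z. split; intros H i; specialize (H i); specialize (Hu i).
      - destruct H as [h|[[h g]|[h g]]]; try lia.
        + exfalso. apply Hlin in g. destruct g as [j [E _]]. apply (GE_LT v i j E).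
        + rewrite HLT in g. lia.
      - destruct (Z.eq_dec (zc z i) (zc v i)); [left; auto|right; right].
        split; [lia|]. apply HLT; lia. }
    unfold isCubeX. exists (sec v), l. split; [apply vertex_of|].
    split.
    { unfold l. apply FinFun.Injective_map_NoDup.
      - intros i j E; apply LT_inj in E; auto.
      - apply NoDup_filter. repeat constructor; simpl; intuition discriminate. }
    split.
    { intros h Hh. apply Hlin in Hh. destruct Hh as [i [-> _]]. unfold LT. apply sec_hs.
      symmetry; apply Z.leb_gt; lia. }
    split.
    { intros h k Hh Hk ne. apply Hlin in Hh. apply Hlin in Hk.
      destruct Hh as [i [-> _]], Hk as [j [-> _]]. unfold LT. apply cross_diff.
      intro E; subst; auto. }
    split.
    { intros h Hh. rewrite flip_sec by auto. apply vertex_of. }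
    intro S'. split.
    + intro HS. pose proof (HCv _ HS) as HV. apply vertex_sec in HV. destruct HV as [z ->].
      assert (Pz v l z). { apply HPB. apply HD. exists (sec z); split; auto; apply phi_sec. }
      apply (box_of v l Hl Hn) in H. destruct H as [T ->]. exists T. rewrite flip_sec; auto.
    + intros [T ->]. rewrite flip_sec by auto.
      assert (HP : Pz v l (dz v l T)) by (apply (box_of v l Hl Hn); eauto).
      pose proof (proj2 (HD _) (proj1 (HPB _) HP)) as HP2. destruct HP2 as [S'' [HS'' E]].
      pose proof (HCv _ HS'') as HV. apply vertex_sec in HV. destruct HV as [z ->].
      rewrite phi_sec in E. subst. exact HS''.
Qed.

Lemma Rabs_maj2x x : - x <= Rabs x.
Proof. rewrite <- Rabs_Ropp. apply Rle_abs. Qed.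

Lemma inG_comp g h : inG g -> inG h -> inG (fun p => g (h p)).
Proof. intros Hg Hh. induction Hg.
  - exact Hh.
  - exact (G_a _ IHHg).
  - exact (G_b _ IHHg).
  - exact (G_c _ IHHg).
Qed.

Definition tr (a b : Z) (p : pt) : pt := (x1 p + IZR (2*a - b), x2 p + IZR (2*b - a)).

Ltac zr := repeat first [rewrite plus_IZR | rewrite minus_IZR | rewrite mult_IZR | rewrite opp_IZR].

Lemma T1_eq (a b : Z) : tr (a+1)%Z b = fun p => refl_b (refl_c (refl_b (refl_a (tr a b p)))).
Proof. apply functional_extensionality; intro p. unfold tr, refl_a, refl_b, refl_c, x1, x2, x3; cbn [fst snd].
  f_equal; zr; ring. Qed.
Lemma T1i_eq (a b : Z) : tr (a-1)%Z b = fun p => refl_a (refl_b (refl_c (refl_b (tr a b p)))).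
Proof. apply functional_extensionality; intro p. unfold tr, refl_a, refl_b, refl_c, x1, x2, x3; cbn [fst snd].
  f_equal; zr; ring. Qed.
Lemma T2_eq (a b : Z) : tr a (b+1)%Z = fun p => refl_a (refl_c (refl_a (refl_b (tr a b p)))).
Proof. apply functional_extensionality; intro p. unfold tr, refl_a, refl_b, refl_c, x1, x2, x3; cbn [fst snd].
  f_equal; zr; ring. Qed.
Lemma T2i_eq (a b : Z) : tr a (b-1)%Z = fun p => refl_b (refl_a (refl_c (refl_a (tr a b p)))).
Proof. apply functional_extensionality; intro p. unfold tr, refl_a, refl_b, refl_c, x1, x2, x3; cbn [fst snd].
  f_equal; zr; ring. Qed.

Lemma tr_00 : tr 0 0 = fun p => p.
Proof. apply functional_extensionality; intros [u w]. unfold tr, x1, x2; simpl. f_equal; ring. Qed.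

Lemma inG_tr a b : inG (tr a b).
Proof.
  assert (H0 : forall a, inG (tr a 0)).
  { intro a0. induction a0 using Z.peano_ind.
    - rewrite tr_00. apply G_id.
    - rewrite <- Z.add_1_r, T1_eq. apply G_b, G_c, G_b, G_a. exact IHa0.
    - rewrite <- Z.sub_1_r, T1i_eq. apply G_a, G_b, G_c, G_b. exact IHa0. }
  induction b using Z.peano_ind.
  - apply H0.
  - rewrite <- Z.add_1_r, T2_eq. apply G_a, G_c, G_a, G_b. exact IHb.
  - rewrite <- Z.sub_1_r, T2i_eq. apply G_b, G_a, G_c, G_a. exact IHb.
Qed.

Definition tau (a b : Z) (i : idx) : Z :=
  match i with I1 => (2*a - b)%Z | I2 => (2*b - a)%Z | I3 => (-a - b)%Z end.

Lemma form_tr a b : Form (tr a b) (true, fun i => i, tau a b).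
Proof. split; [split|split].
  - intro i; exists i; reflexivity.
  - intro f; reflexivity.
  - cbv beta iota delta [tau]; lia.
  - intros i p; destruct i; unfold tr, coord, x1, x2, x3, tau, sg; cbn [fst snd]; zr; ring.
Qed.

Lemma sum3_rc x : sum3 x = rc x I1 + rc x I2 + rc x I3.
Proof. reflexivity. Qed.

Lemma sum3_Aof g s pi t x : Form g (s, pi, t) -> sum3 (Aof (s, pi, t) x) = if s then sum3 x else -3 - sum3 x.
Proof. intros [[_ Hp] [Ht _]].
  assert (Hz : IZR (t I1) + IZR (t I2) + IZR (t I3) = 0) by (rewrite <- !plus_IZR, Ht; reflexivity).
  pose proof (Hp (rc x)) as Hs. rewrite (sum3_rc x). unfold Aof, sum3, mkR3; cbn [fst snd].
  destruct s; lra.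
Qed.

Lemma bnd_rc K M x : (forall x, K x -> Rabs (fst (fst x)) <= M /\ Rabs (snd (fst x)) <= M /\ Rabs (snd x) <= M) ->
  K x -> forall j, - M <= rc x j <= M.
Proof. intros HM Kx j. destruct (HM x Kx) as [a [b c]].
  destruct j; simpl; [pose proof (Rle_abs (fst (fst x))); pose proof (Rabs_maj2x (fst (fst x)))
   |pose proof (Rle_abs (snd (fst x))); pose proof (Rabs_maj2x (snd (fst x)))
   |pose proof (Rle_abs (snd x)); pose proof (Rabs_maj2x (snd x))]; lra.
Qed.

Definition rangeZ (N : Z) : list Z := map (fun n => (Z.of_nat n - N)%Z) (seq 0 (Z.to_nat (2*N+1))).
Lemma in_rangeZ N k : (- N <= k <= N)%Z -> In k (rangeZ N).
Proof. intro H. unfold rangeZ. apply in_map_iff. exists (Z.to_nat (k + N)). split.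
  - rewrite Z2Nat.id by lia. lia.
  - apply in_seq. lia.
Qed.

Definition mkg (s:bool) (j1 j2 : idx) (t1 t2 : Z) : pt -> pt :=
  fun p => (sg s (coord j1 p) + IZR t1, sg s (coord j2 p) + IZR t2).

Definition idxs := I1 :: I2 :: I3 :: nil.

Definition glist (N : Z) : list (pt -> pt) :=
  flat_map (fun s => flat_map (fun j1 => flat_map (fun j2 => flat_map (fun t1 =>
    map (fun t2 => mkg s j1 j2 t1 t2) (rangeZ N)) (rangeZ N)) idxs) idxs) (true :: false :: nil).

Lemma in_glist N s j1 j2 t1 t2 : In t1 (rangeZ N) -> In t2 (rangeZ N) -> In (mkg s j1 j2 t1 t2) (glist N).
Proof. intros H1 H2. unfold glist.
  apply in_flat_map; exists s; split; [destruct s; simpl; auto|].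
  apply in_flat_map; exists j1; split; [destruct j1; simpl; auto|].
  apply in_flat_map; exists j2; split; [destruct j2; simpl; auto|].
  apply in_flat_map; exists t1; split; auto.
  apply in_map_iff; exists t2; split; auto.
Qed.

Lemma t_bound (t r r' M : R) (s : bool) : -M <= r <= M -> -M <= r' <= M ->
  r' = (if s then r + t else t - 1 - r) -> - (2*M+1) <= t <= 2*M+1.
Proof. intros. destruct s; lra. Qed.

Lemma proper K : bounded3 K -> exists l : list (pt -> pt),
  forall g, inG g -> (exists x, K x /\ K (Amap g x)) -> In g l.
Proof.
  intros [M HM]. set (N := up (2*M+1)). exists (glist N).
  intros g Hg [x [Kx KA]].
  pose proof (dat_spec g Hg) as Hd. unfold Amap in KA. destruct (dat g) as [[s pi] t].
  destruct Hd as [Hp [Ht Hf]].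
  assert (Eg : g = mkg s (pi I1) (pi I2) (t I1) (t I2)).
  { apply functional_extensionality; intro p. unfold mkg.
    rewrite <- (Hf I1 p), <- (Hf I2 p). destruct (g p); reflexivity. }
  assert (Hb : forall i, In (t i) (rangeZ N)).
  { intro i. apply in_rangeZ.
    pose proof (bnd_rc K M x HM Kx (pi i)). pose proof (bnd_rc K M _ HM KA i).
    unfold Aof in H0. rewrite rc_mk in H0.
    pose proof (t_bound (IZR (t i)) (rc x (pi i)) _ M s H H0 eq_refl).
    destruct (archimed (2*M+1)) as [A1 _]. fold N in A1.
    assert (t i < N)%Z by (apply lt_IZR; lra).
    assert (- N < t i)%Z by (apply lt_IZR; rewrite opp_IZR; lra). lia. }
  rewrite Eg. apply in_glist; auto.
Qed.

Lemma Amap_tr a b y : Amap (tr a b) y = mkR3 (fun i => rc y i + IZR (tau a b i)).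
Proof. rewrite (Amap_eq _ _ (inG_tr a b) (form_tr a b)). reflexivity. Qed.

Lemma cocompact_plane : exists K, bounded3 K /\ (forall x, K x -> sum3 x = -3/2) /\
  forall x, sum3 x = -3/2 -> exists g y, inG g /\ K y /\ x = Amap g y.
Proof.
  exists (fun y => sum3 y = -3/2 /\ Rabs (fst (fst y)) <= 4 /\ Rabs (snd (fst y)) <= 4 /\ Rabs (snd y) <= 4).
  split; [exists 4; intros x [_ H]; exact H|]. split; [intros x [H _]; exact H|].
  intros x Hx.
  set (al := (2 * rc x I1 + rc x I2) / 3). set (be := (rc x I1 + 2 * rc x I2) / 3).
  set (a := up al). set (b := up be).
  destruct (archimed al) as [A1 A2]. destruct (archimed be) as [B1 B2]. fold a in A1, A2. fold b in B1, B2.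
  exists (tr a b), (mkR3 (fun i => rc x i - IZR (tau a b i))).
  rewrite sum3_rc in Hx.
  split; [apply inG_tr|]. split.
  - cbv beta iota delta [mkR3 tau sum3]; cbn [fst snd]; zr. unfold al, be in *.
    split; [lra|]. split; [apply Rabs_le; lra|]. split; apply Rabs_le; lra.
  - rewrite Amap_tr. rewrite (R3_eta x) at 1. apply mkR3_ext; intro i. rewrite rc_mk. ring.
Qed.

Lemma not_cocompact : ~ (exists K, bounded3 K /\ forall x : R3, exists g y, inG g /\ K y /\ x = Amap g y).
Proof.
  intros [K [[M HM] HK]].
  destruct (HK ((3 * Rabs M + 10, 0), 0)) as [g [y [Hg [Ky E]]]].
  pose proof (bnd_rc K M y HM Ky) as By.
  pose proof (By I1); pose proof (By I2); pose proof (By I3). simpl in *.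
  pose proof (Rle_abs M).
  assert (S : sum3 ((3 * Rabs M + 10, 0), 0) = 3 * Rabs M + 10) by (unfold sum3; simpl; ring).
  rewrite E in S. unfold Amap in S. pose proof (dat_spec g Hg) as Hd.
  destruct (dat g) as [[s pi] t]. rewrite (sum3_Aof g s pi t y Hd) in S.
  unfold sum3 in S. destruct s; lra.
Qed.

Theorem mainTheorem10 (p0 : pt) :
  exists (phi : ((pt -> Prop) -> Prop) -> Z3) (A : (pt -> pt) -> R3 -> R3),
    (forall S T, vertexX Htri p0 S -> vertexX Htri p0 T -> phi S = phi T -> S = T) /\
    (forall z, exists S, vertexX Htri p0 S /\ phi S = z) /\
    (forall C, (forall S, C S -> vertexX Htri p0 S) ->
       (isCubeX Htri p0 C <-> isCubeZ3 (fun z => exists S, C S /\ phi S = z))) /\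
    (forall g, inG g -> affine3 (A g) /\
       forall S, vertexX Htri p0 S ->
         vertexX Htri p0 (act_section Htri g S) /\
         ofZ3 (phi (act_section Htri g S)) = A g (ofZ3 (phi S))) /\
    (forall K, bounded3 K -> exists l : list (pt -> pt),
       forall g, inG g -> (exists x, K x /\ K (A g x)) -> In g l) /\
    (exists c : R,
       (forall g, inG g -> forall x, sum3 x = c -> sum3 (A g x) = c) /\
       exists K, bounded3 K /\ (forall x, K x -> sum3 x = c) /\
         forall x, sum3 x = c -> exists g y, inG g /\ K y /\ x = A g y) /\
    ~ (exists K, bounded3 K /\ forall x : R3, exists g y, inG g /\ K y /\ x = A g y).
Proof.
  exists phi, Amap. split; [|split; [|split; [|split; [|split; [|split]]]]].
  - intros S T HS HT E. apply vertex_sec in HS. apply vertex_sec in HT.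
    destruct HS as [z ->], HT as [w ->]. rewrite !phi_sec in E. subst; reflexivity.
  - intro z; exists (sec z); split; [apply vertex_of|apply phi_sec].
  - intros C HC; apply cube_iff; auto.
  - intros g Hg. split; [apply Aof_affine|]. intros S HS.
    apply vertex_sec in HS. destruct HS as [z ->].
    destruct (inG_form g Hg) as [_ Hsurj].
    pose proof (dat_spec g Hg) as Hd. unfold Amap. destruct (dat g) as [[s pi] t].
    destruct Hd as [Hp [_ Hf]].
    rewrite (act_sec g s pi t z Hsurj Hp Hf). split; [apply vertex_of|].
    rewrite !phi_sec. apply ofZ3_act.
  - apply proper.
  - exists (-3/2). split.
    + intros g Hg x Hx. unfold Amap. pose proof (dat_spec g Hg) as Hd.
      destruct (dat g) as [[s pi] t]. rewrite (sum3_Aof g s pi t x Hd). destruct s; lra.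
    + apply cocompact_plane.
  - apply not_cocompact.
Qed.
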